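(* Let $K$ be a number field and $d\ge 0$. Let $N_0$ be a positive integer such that for every finite field extension $L/K$ with $[L:K]\le d^2$ and every root of unity $\zeta\in L$ one has $\zeta^{N_0}=1$, and put $N\coloneqq N_0$. Let $A\in\mathrm{GL}_d(K)$ and let $V\subseteq K^d$ be a vector subspace. If $V$ is $A^n$-invariant for some $n\ge1$, then $V$ is $A^N$-invariant.
   Context: A subspace $V$ is $B$-invariant if $BV\subseteq V$. *)

(* Defs.v *)
From HB Require Import structures.
From mathcomp Require Import all_boot all_order all_algebra all_field.
Set Implicit Arguments. Unset Strict Implicit. Unset Printing Implicit Defensive.
Import GRing.Theory.
Local Open Scope ring_scope.

(* Subspaces of K^d are represented (mxalgebra style) by the row space of a
   square matrix V : 'M[K]_d.  Vectors of K^d are written as rows; a matrix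
   B acting on column vectors v |-> B v acts on rows as w |-> w *m B^T. *)

Definition is_invariant {F : fieldType} {d : nat} (B V : 'M[F]_d) : bool :=
  (V *m B^T <= V)%MS.

Definition is_root_of_unity {F : nzRingType} (z : F) : Prop :=
  exists m : nat, (0 < m)%N /\ z ^+ m = 1.

(* Main.v *)
From HB Require Import structures.
From mathcomp Require Import all_boot all_order all_algebra all_field.
Set Implicit Arguments. Unset Strict Implicit. Unset Printing Implicit Defensive.
Import GRing.Theory.
Local Open Scope ring_scope.
From Stdlib Require Import Classical.
Require Import Defs.
Import Num.Theory.
Lemma keyP (F : closedFieldType) (n : nat) (hn : (0 < n)%N) (hc : n%:R != 0 :> F) :
  forall k (m g : {poly F}), (size m <= k)%N -> g != 0 -> m %| g \Po 'X^n ->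
  (forall a b, root m a -> root m b -> a != 0 /\ (a ^+ n = b ^+ n -> a = b)) ->
  (size m <= size g)%N.
Proof.
elim=> [|k IH] m g szm gnz mdv hr.
  by apply: leq_trans szm _.
have [sm1|sm1] := eqVneq (size m) 1%N.
  by rewrite sm1 lt0n size_poly_eq0.
have mnz : m != 0.
  apply/eqP => m0; have r0 : root m 0 by rewrite m0 root0.
  by have [] := hr 0 0 r0 r0; rewrite eqxx.
have [mu rmu] := closed_rootP m sm1.
have [m1 Dm] := factor_theorem _ _ rmu.
set beta := mu ^+ n.
have rg : root g beta.
  have : root (g \Po 'X^n) mu by move: rmu; rewrite !root_factor_theorem => h; apply: dvdp_trans h mdv.
  by rewrite /root horner_comp hornerXn.
have [g1 Dg] := factor_theorem _ _ rg.
have rw : root ('X^n - beta%:P) mu by rewrite /root !hornerE subrr.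
have [w Dw] := factor_theorem _ _ rw.
have mu0 : mu != 0 by have [] := hr mu mu rmu rmu.
have wmu : w.[mu] != 0.
  have := congr1 (fun p => p^`().[mu]) Dw => /=.
  rewrite derivM derivXsubC derivB derivXn derivC subr0 !hornerE subrr mulr0 ?add0r ?addr0 ?mulr1.
  rewrite hornerMn hornerXn => <-; rewrite -mulr_natl mulf_neq0 // expf_neq0 //.
have cg : g \Po 'X^n = ((g1 \Po 'X^n) * w) * ('X - mu%:P).
  by rewrite Dg comp_polyM comp_polyB comp_polyX comp_polyC -mulrA -Dw.
have xnz : 'X - mu%:P != 0 by rewrite polyXsubC_eq0.
have m1dv : m1 %| (g1 \Po 'X^n) * w by rewrite -(dvdp_mul2r _ _ xnz) -Dm -cg.
have m1nz : m1 != 0 by apply: contraNneq mnz => m10; rewrite Dm m10 mul0r.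
have g1nz : g1 != 0 by apply: contraNneq gnz => g10; rewrite Dg g10 mul0r.
have cop : coprimep m1 w.
  rewrite /coprimep; apply/negPn/negP => /closed_rootP [om].
  rewrite root_gcd => /andP [rm1 rw1].
  have rmom : root m om by rewrite Dm rootM rm1.
  have : root ('X^n - beta%:P) om by rewrite Dw rootM rw1.
  rewrite /root !hornerE subr_eq0 => /eqP homn.
  have [_ /(_ homn) eom] := hr om mu rmom rmu.
  by move: rw1; rewrite /root eom (negPf wmu).
rewrite Gauss_dvdpl // in m1dv.
have szm1 : size m = (size m1).+1 by rewrite Dm size_Mmonic ?monicXsubC // size_XsubC addn2.
have szg1 : size g = (size g1).+1 by rewrite Dg size_Mmonic ?monicXsubC // size_XsubC addn2.
rewrite szm1 szg1 ltnS; apply: IH => //.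
  by rewrite -ltnS -szm1.
move=> a b ra rb; apply: hr; by rewrite Dm rootM ?ra ?rb.
Qed.
Lemma eig_pow (F : closedFieldType) k (A : 'M[F]_k.+1) N mu :
  eigenvalue (A ^+ N) mu -> exists2 lam, eigenvalue A lam & lam ^+ N = mu.
Proof.
move=> /eigenvalueP [x hx xnz].
set q : {poly F} := 'X^N - mu%:P.
have [cop|ncop] := eqVneq (size (gcdp q (char_poly A))) 1%N.
  have /Bezout_eq1_coprimepP [[u v] /= huv] : coprimep q (char_poly A) by rewrite /coprimep cop.
  have := congr1 (horner_mx A) huv.
  rewrite rmorphD !rmorphM /= Cayley_Hamilton mulr0 addr0 rmorph1.
  have hq : horner_mx A q = A ^+ N - mu%:M.
    by rewrite /q rmorphB rmorphXn /= horner_mx_X horner_mx_C.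
  rewrite hq => h1.
  case/negP: xnz; apply/eqP.
  have : x *m (A ^+ N - mu%:M) = 0 by rewrite mulmxBr hx mul_mx_scalar subrr.
  move=> h0.
  have e1 : horner_mx A u * (A ^+ N - mu%:M) = (A ^+ N - mu%:M) * horner_mx A u.
    by rewrite -hq -!rmorphM mulrC.
  by rewrite -[x]mulmx1 idmxE -h1 e1 mulmxA h0 mul0mx.
have [lam] := closed_rootP _ ncop.
rewrite root_gcd => /andP [rq rc].
exists lam; first by rewrite eigenvalue_root_char.
by move: rq; rewrite /q /root !hornerE subr_eq0 => /eqP.
Qed.
Lemma irr_dvd (F L : fieldType) (f : {rmorphism F -> L}) (p q : {poly F}) a :
  irreducible_poly p -> q != 0 -> root (map_poly f p) a -> root (map_poly f q) a -> p %| q.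
Proof.
move=> irr qnz rp rq.
have rg : root (map_poly f (gcdp p q)) a by rewrite gcdp_map root_gcd rp rq.
have gnz : gcdp p q != 0 by rewrite gcdp_eq0 negb_and qnz orbT.
have sg : size (gcdp p q) != 1%N.
  rewrite -(size_map_poly f); rewrite neq_ltn; apply/orP; right.
  by apply: (root_size_gt1 _ rg); rewrite map_poly_eq0.
have /irr : gcdp p q %| p by rewrite dvdp_gcdl.
move=> /(_ sg) eq; rewrite -(eqp_dvdl _ eq); exact: dvdp_gcdr.
Qed.

Lemma exists_irr (F L : fieldType) (f : {rmorphism F -> L}) z :
  forall k (P : {poly F}), (size P <= k)%N -> P != 0 -> root (map_poly f P) z ->
  exists2 p, irreducible_poly p /\ root (map_poly f p) z & (size p <= size P)%N.
Proof.
elim=> [|k IH] P szP Pnz rP.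
  by move: szP; rewrite leqn0 size_poly_eq0 (negPf Pnz).
have [[Q [Qnz [rQ sQ]]] | nex] := classic (exists Q : {poly F}, Q != 0 /\ root (map_poly f Q) z /\ (size Q < size P)%N).
  have [p hp sp] := IH Q (leq_trans sQ szP : (size Q <= k)%N) Qnz rQ.
  by exists p => //; apply: leq_trans sp (ltnW sQ).
exists P => //; split => //.
apply/(subfx_irreducibleP rP Pnz) => q rq qnz.
rewrite leqNgt; apply/negP => lt; apply: nex; by exists q.
Qed.

Lemma ratio_unity (K : fieldExtType rat) (M : fieldType) (iota : {rmorphism K -> M}) (D N0 : nat)
  (hN0 : forall (L : fieldExtType K), (\dim (fullv : {vspace L}) <= D)%N ->
           forall z : L, is_root_of_unity z -> z ^+ N0 = 1)
  (P : {poly K}) (hP : P != 0) (hsz : (size P <= D.+1)%N) z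
  (hz : root (map_poly iota P) z) (hu : is_root_of_unity z) : z ^+ N0 = 1.
Proof.
have [p [irr rp] sp] := exists_irr hsz hP hz.
case: N0 hN0 => [|N0] hN0; first by rewrite expr0.
have [m [m0 zm]] := hu.
have Xnz : forall k, (0 < k)%N -> ('X^k - 1 : {poly K}) != 0.
  by move=> k k0; apply: monic_neq0; apply: monicXnsubC.
have pd : p %| 'X^m - 1.
  apply: (irr_dvd irr (Xnz _ m0) rp).
  by rewrite /root rmorphB /= map_polyXn rmorph1 !hornerE zm subrr.
have [L dimL [w rw _]] := irredp_FAdjoin irr.
have wm : w ^+ m = 1.
  have /dvdpP [r Dr] := pd.
  have : root (map_poly (in_alg L) ('X^m - 1)) w by rewrite Dr rmorphM rootM /= rw orbT.
  by rewrite /root rmorphB /= map_polyXn rmorph1 !hornerE subr_eq0 => /eqP.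
have wN : w ^+ N0.+1 = 1.
  apply: (hN0 L); last by exists m.
  by rewrite dimL; move: (leq_trans sp hsz); case: (size p).
have pd2 : p %| 'X^(N0.+1) - 1.
  apply: (irr_dvd (f := in_alg L) irr (Xnz _ (ltn0Sn _)) rw).
  by rewrite /root rmorphB /= map_polyXn rmorph1 !hornerE wN subrr.
have /dvdpP [r Dr] := pd2.
have : root (map_poly iota ('X^(N0.+1) - 1)) z by rewrite Dr rmorphM rootM /= rp orbT.
by rewrite /root rmorphB /= map_polyXn rmorph1 !hornerE subr_eq0 => /eqP.
Qed.
Definition PhiM (F : fieldType) k (B : 'M[F]_k) : 'M[F]_(k * k) :=
  lin_mx (mulmx (invmx B^T)) *m lin_mx (mulmxr B).

Lemma eig_nz (F : fieldType) k (B : 'M[F]_k) a : B \in unitmx -> eigenvalue B a -> a != 0.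
Proof.
move=> hB /eigenvalueP [v hv vnz]; apply: contraNneq vnz => a0.
by rewrite -(mulmxK hB v) hv a0 scale0r mul0mx.
Qed.

Lemma eig_ratio (F : fieldType) k (B : 'M[F]_k) l1 l2 : B \in unitmx ->
  eigenvalue B l1 -> eigenvalue B l2 -> eigenvalue (PhiM B) (l1 / l2).
Proof.
move=> hB e1 e2; have l2nz := eig_nz hB e2.
move: e1 e2 => /eigenvalueP [u hu unz] /eigenvalueP [w hw wnz].
apply/eigenvalueP; exists (mxvec (w^T *m u)).
  rewrite /PhiM mulmxA !mul_vec_lin /=.

  have hT : B^T *m w^T = l2 *: w^T by rewrite -trmx_mul hw linearZ.
  have hI : invmx B^T *m w^T = l2^-1 *: w^T.
    have hBT : B^T \in unitmx by rewrite unitmx_tr.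
    by rewrite -[in RHS](mulKmx hBT w^T) hT -scalemxAr scalerA mulVf // scale1r.
  by rewrite mulmxA hI -!scalemxAl -mulmxA hu -scalemxAr scalerA linearZ mulrC.
rewrite mxvec_eq0; apply/negP => /eqP h.
have : (w^T *m u)^T == 0 by rewrite h trmx0.
rewrite trmx_mul trmxK mulmx_free_eq0 ?trmx_eq0 ?(negPf unz) //.
by rewrite /row_free rank_rV wnz.
Qed.
Lemma map_PhiM (F L : fieldType) (f : {rmorphism F -> L}) k (B : 'M[F]_k) :
  map_mx f (PhiM B) = PhiM (map_mx f B).
Proof.
rewrite /PhiM map_mxM; congr (_ *m _); apply: map_lin_mx => X /=.
  by rewrite map_mxM map_invmx map_trmx.
by rewrite map_mxM.
Qed.

Lemma trmxX (R : comNzRingType) k (A : 'M[R]_k.+1) m : (A ^+ m)^T = A^T ^+ m.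
Proof.
elim: m => [|m IH]; first by rewrite !expr0 -!idmxE trmx1.
by rewrite exprS -mulmxE trmx_mul IH mulmxE -exprSr.
Qed.

Lemma map_mxX (F L : fieldType) (f : {rmorphism F -> L}) k (A : 'M[F]_k.+1) m :
  map_mx f (A ^+ m) = (map_mx f A) ^+ m.
Proof.
elim: m => [|m IH]; first by rewrite !expr0 -!idmxE map_mx1.
by rewrite !exprS -!mulmxE map_mxM IH.
Qed.

Lemma horner_mx_comp (F : fieldType) k (C : 'M[F]_k.+1) (p q : {poly F}) :
  horner_mx C (p \Po q) = horner_mx (horner_mx C q) p.
Proof.
elim/poly_ind: p => [|p c IH]; first by rewrite comp_poly0 !rmorph0.
rewrite comp_polyD comp_polyM comp_polyX comp_polyC !rmorphD !rmorphM /= IH.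
by rewrite !horner_mx_C horner_mx_X.
Qed.

Lemma closure_exists (K : fieldExtType rat) : {M : closedFieldType & {iota : {rmorphism K -> M} | True}}.
Proof.
pose Kc : countFieldType := HB.pack K (isCountable.Build K (pcan_pickleK (can_pcan (@VectorInternalTheory.v2rK _ K)))).
have [M [f _]] := countable_algebraic_closure Kc.
by exists M; exists f.
Qed.

Lemma stab_from_deg (F : fieldType) k (C : 'M[F]_k.+1) n (V : 'M[F]_k.+1) :
  stablemx V (C ^+ n) -> (degree_mxminpoly C <= degree_mxminpoly (C ^+ n))%N ->
  stablemx V C.
Proof.
move=> hD hdeg.
suff key : (mxvec C <= powers_mx (C ^+ n) (degree_mxminpoly (C ^+ n)))%MS.
  rewrite -(mx_inv_hornerK key); exact: (horner_mx_stable _ hD).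
have sub : (powers_mx (C ^+ n) (degree_mxminpoly (C ^+ n)) <= powers_mx C (degree_mxminpoly C))%MS.
  apply/row_subP => i; rewrite rowK.
  have -> : (C ^+ n) ^+ i = horner_mx C 'X^(n * i) by rewrite rmorphXn /= horner_mx_X exprM.
  exact: horner_mx_mem.
have := mxrank_leqif_sup sub.
move/geq_leqif; rewrite (eqP (minpoly_mx_free C)) (eqP (minpoly_mx_free (C ^+ n))) hdeg => /esym sub2.
apply: submx_trans sub2; have := horner_mx_mem C 'X; by rewrite horner_mx_X.
Qed.
Lemma roots_cond (K : fieldExtType rat) (k N0 n : nat) (hN0pos : (0 < N0)%N) (hn : (0 < n)%N)
  (hN0 : forall (L : fieldExtType K), (\dim (fullv : {vspace L}) <= k.+1 ^ 2)%N ->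
           forall z : L, is_root_of_unity z -> z ^+ N0 = 1)
  (B : 'M[K]_k.+1) (hB : B \in unitmx) (M : closedFieldType) (iota : {rmorphism K -> M}) :
  forall a b, root (map_poly iota (mxminpoly (B ^+ N0))) a ->
    root (map_poly iota (mxminpoly (B ^+ N0))) b -> a != 0 /\ (a ^+ n = b ^+ n -> a = b).
Proof.
have hBM : map_mx iota B \in unitmx by rewrite map_unitmx.
have eigC : forall a, root (map_poly iota (mxminpoly (B ^+ N0))) a ->
    exists2 l, eigenvalue (map_mx iota B) l & l ^+ N0 = a.
  move=> a; rewrite -mxminpoly_map -eigenvalue_root_min map_mxX => /eig_pow; exact.
move=> a b ra rb.
have [l1 e1 <-] := eigC a ra; have [l2 e2 <-] := eigC b rb.
have l1nz := eig_nz hBM e1; have l2nz := eig_nz hBM e2.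
split; first by rewrite expf_neq0.
move=> hpow.
have zN : (l1 / l2) ^+ N0 = 1.
  apply: (ratio_unity (iota:=iota) hN0 (P := char_poly (PhiM B))).
  - by rewrite -size_poly_eq0 size_char_poly.
  - by rewrite size_char_poly mulnn.
  - by rewrite map_char_poly map_PhiM -eigenvalue_root_char; exact: (eig_ratio hBM e1 e2).
  - exists (N0 * n)%N; split; first by rewrite muln_gt0 hN0pos.
    by rewrite expr_div_n exprM hpow -exprM divff // expf_neq0.
apply: (@divr1_eq M); by move: zN; rewrite expr_div_n.
Qed.
Lemma hdiv_lem (F : fieldType) k (C : 'M[F]_k.+1) n :
  mxminpoly C %| mxminpoly (C ^+ n) \Po 'X^n.
Proof.
by apply: mxminpoly_min; rewrite horner_mx_comp rmorphXn /= horner_mx_X mx_root_minpoly.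
Qed.
Lemma hc_lem (K : fieldExtType rat) (M : fieldType) (iota : {rmorphism K -> M}) n :
  (0 < n)%N -> n%:R != 0 :> M.
Proof.
by move=> hn; rewrite -(rmorph_nat iota) fmorph_eq0 -(rmorph_nat (in_alg K)) fmorph_eq0 pnatr_eq0 -lt0n.
Qed.
Lemma deg_le (K : fieldExtType rat) (k N0 n : nat) (hN0pos : (0 < N0)%N) (hn : (0 < n)%N)
  (hN0 : forall (L : fieldExtType K), (\dim (fullv : {vspace L}) <= k.+1 ^ 2)%N ->
           forall z : L, is_root_of_unity z -> z ^+ N0 = 1)
  (B : 'M[K]_k.+1) (hB : B \in unitmx) :
  (degree_mxminpoly (B ^+ N0) <= degree_mxminpoly ((B ^+ N0) ^+ n))%N.
Proof.
have [M [iota _]] := closure_exists K.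
have e1 := size_map_poly iota (mxminpoly (B ^+ N0)).
have e2 := size_map_poly iota (mxminpoly ((B ^+ N0) ^+ n)).
have s1 := size_mxminpoly (B ^+ N0).
have s2 := size_mxminpoly ((B ^+ N0) ^+ n).
have h : (size (map_poly iota (mxminpoly (B ^+ N0))) <= size (map_poly iota (mxminpoly ((B ^+ N0) ^+ n))))%N.
  apply: (keyP hn (hc_lem iota hn) (leqnn _)).
  - by rewrite map_poly_eq0 monic_neq0 // mxminpoly_monic.
  - by rewrite -(map_polyXn iota) -map_comp_poly dvdp_map hdiv_lem.
  exact: roots_cond.
rewrite [X in (X <= _)%N]e1 [X in (_ <= X)%N]e2 in h.
rewrite [X in (X <= _)%N]s1 [X in (_ <= X)%N]s2 in h.
exact: h.
Qed.

Theorem mainTheorem11 (K : fieldExtType rat) (d N0 : nat)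
  (hN0pos : (0 < N0)%N)
  (hN0 : forall (L : fieldExtType K), (\dim (fullv : {vspace L}) <= d ^ 2)%N ->
           forall z : L, is_root_of_unity z -> z ^+ N0 = 1)
  (A : 'M[K]_d) (hA : A \in unitmx) (V : 'M[K]_d)
  (n : nat) (hn : (1 <= n)%N) (hV : is_invariant (A ^+ n) V) :
  is_invariant (A ^+ N0) V.
Proof.
case: d hN0 A hA V hV => [|d'] hN0 A hA V hV.
  by rewrite /is_invariant thinmx0 sub0mx.
rewrite /is_invariant in hV *.
rewrite trmxX in hV; rewrite trmxX.
have hB : A^T \in unitmx by rewrite unitmx_tr.
apply: (@stab_from_deg _ _ _ n).
  have := horner_mx_stable 'X^N0 hV.
  by rewrite rmorphXn /= horner_mx_X -!exprM mulnC.
exact: (deg_le hN0pos hn hN0 hB).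
Qed.
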